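(* The category $\mathbf{CA}$ of conditional algebras with conditional homomorphisms and the category $\mathbf{CS}$ of conditional spaces with conditional functions are dually equivalent.
   Context: A conditional algebra is $\langle A,\to\rangle$ with $A$ a Boolean algebra and $\to$ binary with $a\to1=1$, $(a\to b)\wedge(a\to c)=a\to(b\wedge c)$, $(a\vee b)\to c\le(a\to c)\wedge(b\to c)$. A conditional homomorphism is a Boolean homomorphism $h$ with $h(a\to b)=h(a)\to h(b)$. A conditional space is $\langle X,\tau,T\rangle$ with $\langle X,\tau\rangle$ a Boolean space and $T\subseteq X\times\mathcal{C}(\tau)\times X$ ($\mathcal{C}(\tau)$ the closed sets) satisfying: (T1) $T(x,Y)=\{y:T(x,Y,y)\}$ is closed for every $x$ and closed $Y$; (T2) for clopen $U,V$, $U\to_T V=\{x:\text{for all closed }Z\subseteq U,\ T(x,Z)\subseteq V\}$ is clopen; (T3) for closed $Y$, $T(x,Y,y)$ iff $T(x,U,y)$ for all clopen $U\supseteq Y$. A conditional function between conditional spaces $\langle X_1,\tau_1,T_1\rangle$, $\langle X_2,\tau_2,T_2\rangle$ is a continuous $f\colon X_1\to X_2$ such that for all $x\in X_1$ and clopen $U,V\subseteq X_2$: $T_1(x,f^{-1}[U])\subseteq f^{-1}[V]$ iff $T_2(f(x),U)\subseteq V$. In both categories composition is composition of maps and identities are identity maps. *)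

(* Defs.v *)
From HB Require Import structures.
From mathcomp Require Import all_boot all_order.
From mathcomp Require Import all_classical all_reals all_analysis.
Set Implicit Arguments. Unset Strict Implicit. Unset Printing Implicit Defensive.
Import Order.Theory.
Local Open Scope classical_set_scope.

Record Cat := MkCat {
  ob : Type;
  hom : ob -> ob -> Type;
  idm : forall A, hom A A;
  comp : forall A B C, hom B C -> hom A B -> hom A C }.
Arguments idm {c} A.
Arguments comp {c A B C}.

Record CoFunctor (C D : Cat) := MkCoFunctor {
  fob : ob C -> ob D;
  fmor : forall A B, @hom C A B -> @hom D (fob B) (fob A);
  fmor_id : forall A, fmor (idm A) = idm (fob A);
  fmor_comp : forall A B E (f : @hom C A B) (g : @hom C B E),
      fmor (comp g f) = comp (fmor f) (fmor g) }.
Arguments fob {C D}.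
Arguments fmor {C D} _ {A B}.

Definition is_iso (C : Cat) (A B : ob C) (f : @hom C A B) : Prop :=
  exists g : @hom C B A, comp g f = idm A /\ comp f g = idm B.

Definition dually_equivalent (C D : Cat) : Prop :=
  exists (F : CoFunctor C D) (G : CoFunctor D C)
         (eta : forall A : ob C, @hom C A (fob G (fob F A)))
         (eps : forall X : ob D, @hom D X (fob F (fob G X))),
    (forall A, is_iso (eta A)) /\
    (forall A B (f : @hom C A B),
        comp (fmor G (fmor F f)) (eta A) = comp (eta B) f) /\
    (forall X, is_iso (eps X)) /\
    (forall X Y (f : @hom D X Y),
        comp (fmor F (fmor G f)) (eps X) = comp (eps Y) f).

(* A Boolean algebra is a complemented bounded distributive lattice     *)
(* (mathcomp's ctbDistrLatticeType).                                    *)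
Section CondAlg.
Local Open Scope order_scope.

Record CondAlg := MkCondAlg {
  ca_disp : Order.disp_t;
  ca_car : ctbDistrLatticeType ca_disp;
  ca_imp : ca_car -> ca_car -> ca_car;
  ca_imp_top : forall a : ca_car, ca_imp a \top = \top;
  ca_imp_meet : forall a b c : ca_car,
      ca_imp a b `&` ca_imp a c = ca_imp a (b `&` c);
  ca_imp_join : forall a b c : ca_car,
      ca_imp (a `|` b) c <= ca_imp a c `&` ca_imp b c }.

Definition is_bool_hom (A B : CondAlg) (h : ca_car A -> ca_car B) : Prop :=
  [/\ forall x y, h (x `&` y) = h x `&` h y,
      forall x y, h (x `|` y) = h x `|` h y,
      h \bot = \bot, h \top = \top &
      forall x, h (~` x) = ~` h x].

Definition is_cond_hom (A B : CondAlg) (h : ca_car A -> ca_car B) : Prop :=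
  is_bool_hom h /\ forall a b, h (ca_imp a b) = ca_imp (h a) (h b).

End CondAlg.

Definition CAhom (A B : CondAlg) := {h : ca_car A -> ca_car B | is_cond_hom h}.

Lemma is_cond_hom_id (A : CondAlg) : is_cond_hom (@id (ca_car A)).
Proof. by split. Qed.

Lemma is_cond_hom_comp (A B C : CondAlg) (g : ca_car B -> ca_car C)
  (f : ca_car A -> ca_car B) : is_cond_hom g -> is_cond_hom f -> is_cond_hom (g \o f).
Proof.
move=> [[g1 g2 g3 g4 g5] g6] [[f1 f2 f3 f4 f5] f6]; split; last by move=> a b /=; rewrite f6 g6.
by split => [x y|x y||| x] /=; rewrite ?f1 ?g1 ?f2 ?g2 ?f3 ?g3 ?f4 ?g4 ?f5 ?g5.
Qed.

Definition CA : Cat := @MkCat CondAlg CAhom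
  (fun A => exist _ id (is_cond_hom_id A))
  (fun A B C g f => exist _ (sval g \o sval f) (is_cond_hom_comp (svalP g) (svalP f))).

Definition boolean_space (X : topologicalType) : Prop :=
  [/\ compact [set: X], hausdorff_space X &
      forall (x : X) (U : set X), open U -> U x ->
        exists V : set X, [/\ clopen V, V x & V `<=` U]].

Definition Tsec (X : Type) (T : X -> set X -> X -> Prop) (x : X) (Y : set X) : set X :=
  [set y | T x Y y].

Definition Timp (X : topologicalType) (T : X -> set X -> X -> Prop) (U V : set X) : set X :=
  [set x | forall Z : set X, closed Z -> Z `<=` U -> Tsec T x Z `<=` V].

(* T is a ternary relation on X x C(tau) x X: its middle component is always
   a closed set (the field cs_T_closed). *)
Record CondSpace := MkCondSpace {
  cs_car : topologicalType;
  cs_bool : boolean_space cs_car;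
  cs_T : cs_car -> set cs_car -> cs_car -> Prop;
  cs_T_closed : forall x Y y, cs_T x Y y -> closed Y;
  cs_T1 : forall x Y, closed Y -> closed (Tsec cs_T x Y);
  cs_T2 : forall U V, clopen U -> clopen V -> clopen (Timp cs_T U V);
  cs_T3 : forall Y, closed Y -> forall x y,
      cs_T x Y y <-> (forall U, clopen U -> Y `<=` U -> cs_T x U y) }.

Definition is_cond_fun (X1 X2 : CondSpace) (f : cs_car X1 -> cs_car X2) : Prop :=
  continuous f /\
  forall (x : cs_car X1) (U V : set (cs_car X2)), clopen U -> clopen V ->
    (Tsec (@cs_T X1) x (f @^-1` U) `<=` f @^-1` V <->
     Tsec (@cs_T X2) (f x) U `<=` V).

Definition CShom (X Y : CondSpace) := {f : cs_car X -> cs_car Y | is_cond_fun f}.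

Lemma is_cond_fun_id (X : CondSpace) : is_cond_fun (@id (cs_car X)).
Proof. by split => // x; exact: cvg_id. Qed.

Lemma is_cond_fun_comp (X Y Z : CondSpace) (g : cs_car Y -> cs_car Z)
  (f : cs_car X -> cs_car Y) : is_cond_fun g -> is_cond_fun f -> is_cond_fun (g \o f).
Proof.
move=> [gc gT] [fc fT]; split.
  by move=> x; apply: continuous_comp; [exact: fc | exact: gc].
move=> x U V cU cV; rewrite -(gT (f x) U V cU cV).
have cU' : clopen (g @^-1` U).
  by case: cU => oU clU; split; [apply: open_comp => // y _; exact: gc | exact: preimage_closed].
have cV' : clopen (g @^-1` V).
  by case: cV => oV clV; split; [apply: open_comp => // y _; exact: gc | exact: preimage_closed].
exact: (fT x _ _ cU' cV').
Qed.

Definition CS : Cat := @MkCat CondSpace CShom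
  (fun X => exist _ id (is_cond_fun_id X))
  (fun X Y Z g f => exist _ (sval g \o sval f) (is_cond_fun_comp (svalP g) (svalP f))).

(* Main.v *)
Require Import Defs.
From HB Require Import structures.
From mathcomp Require Import all_boot all_order.
From mathcomp Require Import all_classical all_reals all_analysis.
Set Implicit Arguments. Unset Strict Implicit. Unset Printing Implicit Defensive.
Import Order.Theory.
Local Open Scope classical_set_scope.
Local Open Scope order_scope.

Section BA.
Variables (d : Order.disp_t) (L : ctbDistrLatticeType d).

Definition uf (p : set L) :=
  (forall a b, p (a `&` b) <-> p a /\ p b) /\ (forall a, p (~` a) <-> ~ p a).

Lemma uf_le (p : set L) a b : uf p -> a <= b -> p a -> p b.
Proof. by move=> [hm _] /meet_l <- /hm []. Qed.

Lemma uf_bot (p : set L) : uf p -> ~ p \bot.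
Proof. by move=> [hm hc]; rewrite -(meetxC \top) => /hm [h1 h2]; exact: (proj1 (hc _) h2 h1). Qed.

Lemma uf_top (p : set L) : uf p -> p \top.
Proof. by move=> u; have [_ hc] := u; rewrite -compl0; apply/hc/uf_bot. Qed.

Lemma uf_join (p : set L) a b : uf p -> (p (a `|` b) <-> p a \/ p b).
Proof.
move=> u; have [hm hc] := u.
rewrite -[a `|` b]complK complU hc hm !hc.
split; last by case=> h [].
by move=> h; case: (pselect (p a)) => ?; [left|right; apply: contrapT => ?; apply: h].
Qed.

Lemma disjC (x y : L) : x `&` y <= \bot -> x <= ~` y.
Proof.
rewrite lex0 => /eqP h.
have -> : x = x `&` ~` y by rewrite -[LHS]meetx1 -(joinxC y) meetUr h join0x.
exact: leIr.
Qed.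

Definition filt (S : set L) :=
  [/\ S \top, (forall a b, S a -> S b -> S (a `&` b)) &
      (forall a b, a <= b -> S a -> S b)].

Lemma uf_ext (S : set L) : filt S -> ~ S \bot -> exists p, uf p /\ S `<=` p.
Proof.
move=> fS nS.
pose T := {F : set L | [/\ filt F, ~ F \bot & S `<=` F]}.
pose R := fun s t : T => `[< sval s `<=` sval t >].
have RP s t : R s t <-> sval s `<=` sval t by rewrite /R; split => /asboolP.
have S0 : [/\ filt S, ~ S \bot & S `<=` S] by split.
have [M HM] : exists M : T, forall s, R M s -> s = M.
  apply: (@Zorn T R).
  - by move=> t; apply/RP.
  - by move=> r s t /RP h1 /RP h2; apply/RP => x /h1 /h2.
  - move=> s t /RP h1 /RP h2; case: s t h1 h2 => [s ps] [t pt] /= h1 h2.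
    by apply: eq_exist; apply/seteqP; split.
  move=> A tot.
  pose U := [set x | S x \/ exists t, A t /\ sval t x].
  have UP : [/\ filt U, ~ U \bot & S `<=` U].
    split; last by move=> x; left.
    - split; first by left; case: fS.
      + move=> a b [Sa|[t [At ta]]] [Sb|[t' [At' tb]]].
        * by left; case: fS => _ + _; apply.
        * right; exists t'; split=> //; case: (svalP t') => [[_ hm _] _ hS].
          by apply: hm => //; apply: hS.
        * right; exists t; split=> //; case: (svalP t) => [[_ hm _] _ hS].
          by apply: hm => //; apply: hS.
        * case: (tot t t' At At') => /RP h.
          - right; exists t'; split=> //; case: (svalP t') => [[_ hm _] _ hS].
            by apply: hm => //; apply: h.
          - right; exists t; split=> //; case: (svalP t) => [[_ hm _] _ hS].
            by apply: hm => //; apply: h.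
      + move=> a b ab [Sa|[t [At ta]]].
        * by left; case: fS => _ _; apply; eauto.
        * right; exists t; split=> //; case: (svalP t) => [[_ _ hu] _ _].
          exact: hu ta.
    - case=> // -[t [_ tb]]; by case: (svalP t) => _ + _; apply.
  exists (exist _ U UP) => s As; apply/RP => x sx /=; right; by exists s.
have [fM nM SM] := svalP M.
set F := sval M in fM nM SM *.
have [fT fI fU] := fM.
exists F; split=> //; split.
  move=> a b; split; last by case; apply: fI.
  by move=> h; split; apply: fU h; [exact: leIl | exact: leIr].
move=> a; split.
  by move=> h1 h2; apply: nM; rewrite -(meetxC a); apply: fI.
move=> Fa; apply: contrapT => nFc.
pose F' := [set c | exists2 m, F m & m `&` a <= c].
have F'P : [/\ filt F', ~ F' \bot & S `<=` F'].
  split.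
  - split.
    + by exists \top => //; rewrite meet1x lex1.
    + move=> x y [m1 F1 h1] [m2 F2 h2]; exists (m1 `&` m2); first exact: fI.
      rewrite lexI; apply/andP; split.
      * by apply: le_trans h1; apply: leI2 => //; exact: leIl.
      * by apply: le_trans h2; apply: leI2 => //; exact: leIr.
    + by move=> x y xy [m Fm h]; exists m => //; exact: le_trans xy.
  - by case=> m Fm /disjC h; apply: nFc; apply: fU h Fm.
  - by move=> x /SM Fx; exists x => //; exact: leIl.
have E : F' = F.
  have RMF : R M (exist _ F' F'P) by apply/RP => x Fx /=; exists x => //; exact: leIl.
  by have := HM _ RMF => /(congr1 sval).
by apply: Fa; rewrite -E; exists \top => //; exact: leIr.
Qed.
End BA.
Local Close Scope order_scope.
Definition clop (X : topologicalType) := {U : set X | clopen U}.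
HB.instance Definition _ (X : topologicalType) := gen_eqMixin (clop X).
HB.instance Definition _ (X : topologicalType) := gen_choiceMixin (clop X).

Section Clop.
Variable X : topologicalType.
Implicit Types U V W : clop X.

Lemma clop_eq U V : sval U = sval V -> U = V.
Proof. by case: U V => [u pu] [v pv] /= e; exact: eq_exist. Qed.

Definition cmeet U V : clop X := exist _ (sval U `&` sval V) (clopenI (svalP U) (svalP V)).
Definition cjoin U V : clop X := exist _ (sval U `|` sval V) (clopenU (svalP U) (svalP V)).
Definition ccompl U : clop X := exist _ (~` sval U) (@clopenC _ _ set0 (svalP U)).
Definition cbot : clop X := exist _ set0 clopen0.
Definition ctop : clop X := exist _ setT clopenT.
Definition cle U V := (cmeet U V == U).
Definition clt U V := (V != U) && cle U V.

Ltac seteq := apply: clop_eq; rewrite /=; apply/funext => z; apply/propext;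
  rewrite /setI /setU /setC /=; try by tauto.

Fact cmeetC : commutative cmeet. Proof. move=> U V; seteq. Qed.
Fact cjoinC : commutative cjoin. Proof. move=> U V; seteq. Qed.
Fact cmeetA : associative cmeet. Proof. move=> U V W; seteq. Qed.
Fact cjoinA : associative cjoin. Proof. move=> U V W; seteq. Qed.
Fact cjoinKI y x : cmeet x (cjoin x y) = x. Proof. seteq. Qed.
Fact cmeetKU y x : cjoin x (cmeet x y) = x. Proof. seteq. Qed.
Fact cmeetUl : left_distributive cmeet cjoin. Proof. move=> U V W; seteq. Qed.
Fact cmeetxx : idempotent_op cmeet. Proof. move=> U; seteq. Qed.

HB.instance Definition _ := @Order.isMeetJoinDistrLattice.Build (Order.Disp tt tt) (clop X)
  cle clt cmeet cjoin (fun _ _ => erefl) (fun _ _ => erefl) cmeetC cjoinC cmeetA cjoinA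
  cjoinKI cmeetKU cmeetUl cmeetxx.

Fact cle0x U : cle cbot U. Proof. by apply/eqP; seteq. Qed.
Fact clex1 U : cle U ctop. Proof. by apply/eqP; seteq. Qed.
HB.instance Definition _ := @Order.hasBottom.Build (Order.Disp tt tt) (clop X) cbot cle0x.
HB.instance Definition _ := @Order.hasTop.Build (Order.Disp tt tt) (clop X) ctop clex1.
Fact cjoinxC U : cjoin U (ccompl U) = ctop.
Proof. apply: clop_eq; apply/funext => z; apply/propext; rewrite /setU /setC /=.
by split => // _; case: (pselect (sval U z)) => ?; tauto. Qed.
Fact cmeetxC U : cmeet U (ccompl U) = cbot.
Proof. seteq. Qed.
HB.instance Definition _ := @Order.TBDistrLattice_hasComplement.Build (Order.Disp tt tt) (clop X)
  ccompl cjoinxC cmeetxC.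

End Clop.

Lemma compact_filter_pt (X : topologicalType) (F : set_system X) :
  compact [set: X] -> ProperFilter F ->
  exists x, forall C, closed C -> F C -> C x.
Proof.
move=> cpt PF; have [x [_ clx]] := cpt F PF filterT.
exists x => C cC FC; apply: contrapT => nCx.
have nb : nbhs x (~` C) by apply: open_nbhs_nbhs; split => //; exact: closed_openC.
by have [z [Cz nCz]] := clx C (~` C) FC nb.
Qed.

Section Spec.
Variables (d : Order.disp_t) (L : ctbDistrLatticeType d).

Definition spec := {p : set L | uf p}.
HB.instance Definition _ := gen_eqMixin spec.
HB.instance Definition _ := gen_choiceMixin spec.

Definition phi (a : L) : set spec := [set p | sval p a].

Definition sopen (U : set spec) := forall p, U p -> exists a, sval p a /\ phi a `<=` U.

Fact sopT : sopen setT.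
Proof. by move=> p _; exists \top%O; split => //; apply: uf_top (svalP p). Qed.

Fact sopI : setI_closed sopen.
Proof.
move=> U V oU oV p [/oU [a [pa sa]] /oV [b [pb sb]]].
exists (a `&` b)%O; split; first by apply/(proj1 (svalP p)).
by move=> q /(proj1 (svalP q) a b) [qa qb]; split; [apply: sa | apply: sb].
Qed.

Fact sop_bigU (I : Type) (f : I -> set spec) : (forall i, sopen (f i)) -> sopen (\bigcup_i f i).
Proof.
move=> hf p [i _ fi]; have [a [pa sa]] := hf i p fi.
by exists a; split => // q /sa fq; exists i.
Qed.

HB.instance Definition _ := isOpenTopological.Build spec sopT sopI sop_bigU.

Lemma openE_spec (U : set spec) : open U <-> sopen U.
Proof. by []. Qed.

Lemma filt_gen (S : set L) a : filt S -> filt [set c | exists2 s, S s & (s `&` a <= c)%O].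
Proof.
case=> fT fI fU; split.
- by exists \top%O => //; rewrite lex1.
- move=> x y [m1 F1 h1] [m2 F2 h2]; exists (m1 `&` m2)%O; first exact: fI.
  rewrite lexI; apply/andP; split.
  + by apply: le_trans h1; apply: leI2 => //; exact: leIl.
  + by apply: le_trans h2; apply: leI2 => //; exact: leIr.
- by move=> x y xy [m Fm h]; exists m => //; exact: le_trans xy.
Qed.

Lemma uf_ext_avoid (S : set L) b : filt S -> ~ S b ->
  exists p, [/\ uf p, S `<=` p & ~ p b].
Proof.
move=> fS nSb.
have nb : ~ [set c | exists2 s, S s & (s `&` ~` b <= c)%O] \bot%O.
  case=> s Ss /disjC; rewrite complK => sb; apply: nSb.
  by case: fS => _ _; apply; eauto.
have [p [up sp]] := uf_ext (filt_gen (~` b)%O fS) nb.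
exists p; split.
- exact: up.
- by move=> x Sx; apply: sp; exists x => //; exact: leIl.
- by apply/(proj2 up b); apply: sp; exists \top%O; [case: fS| exact: leIr].
Qed.

Lemma filt_up (a : L) : filt [set c | (a <= c)%O].
Proof.
split => /=; first exact: lex1.
- by move=> x y ax ay; rewrite lexI ax ay.
- by move=> x y xy ax; exact: le_trans xy.
Qed.

Lemma phi_le a b : phi a `<=` phi b -> (a <= b)%O.
Proof.
move=> sab; apply: contrapT => nab.
have [p [up sp npb]] := uf_ext_avoid (filt_up a) nab.
by apply: npb; apply: (sab (exist _ p up)); apply: sp => /=.
Qed.

Lemma phi_inj a b : phi a = phi b -> a = b.
Proof. by move=> e; apply/le_anti; rewrite !phi_le // e. Qed.

Lemma phiI a b : phi (a `&` b)%O = phi a `&` phi b.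
Proof. by apply/funext => p; apply/propext; exact: (proj1 (svalP p)). Qed.

Lemma phiC a : phi (~` a)%O = ~` phi a.
Proof. by apply/funext => p; apply/propext; exact: (proj2 (svalP p)). Qed.

Lemma phiU a b : phi (a `|` b)%O = phi a `|` phi b.
Proof. by apply/funext => p; apply/propext; exact: (uf_join _ _ (svalP p)). Qed.

Lemma phiT : phi \top%O = setT.
Proof. by apply/funext => p; apply/propext; split => // _; exact: (uf_top (svalP p)). Qed.

Lemma phi0 : phi \bot%O = set0.
Proof. by apply/funext => p; apply/propext; split => // /(uf_bot (svalP p)). Qed.

Lemma phi_open a : open (phi a).
Proof. by apply/openE_spec => p pa; exists a; split. Qed.

Lemma phi_clopen a : clopen (phi a).
Proof.
split; first exact: phi_open.
by rewrite -[a]complK phiC; apply: open_closedC; exact: phi_open.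
Qed.

Lemma phi_sep (p q : spec) : p != q -> exists a, phi a p /\ ~ phi a q.
Proof.
move=> /eqP npq.
have [a hne] : exists a, sval p a <> sval q a.
  apply: contrapT => h; apply: npq; case: p q h => [p up] [q uq] /= h.
  apply: eq_exist; apply/funext => a; apply: contrapT => e; apply: h; by exists a.
case: (pselect (sval p a)) => pa.
  by exists a; split => // qa; apply: hne; apply/propext.
exists (~` a)%O; split; first exact/(proj2 (svalP p)).
rewrite /phi /= (proj2 (svalP q)) => nqa; apply: hne; apply/propext; split => //.
Qed.

Lemma spec_compact : compact [set: spec].
Proof.
rewrite compact_ultra => F UF _.
have PF : ProperFilter F by exact: ultra_proper.
have FC (X : set spec) : F (~` X) <-> ~ F X.
  split.
  - by move=> h1 h2; apply: (filter_not_empty F); rewrite -(setICl X); exact: filterI.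
  - by move=> h; case: (in_ultra_setVsetC X UF).
pose p0 := [set a : L | F (phi a)].
have up0 : uf p0.
  split => [a b|a]; rewrite /p0 /=.
  - rewrite phiI; split; first by move=> h; split; apply: filterS h => ? [].
    by case; exact: filterI.
  - by rewrite phiC FC.
exists (exist _ p0 up0); split => //.
move=> B /=; rewrite nbhsE => -[U [oU U0] sUB].
have [a [pa sa]] := oU _ U0.
change (F B); apply: (@filterS _ F _ U B sUB); apply: (@filterS _ F _ (phi a) U sa); exact: pa.
Qed.

Lemma spec_bool : boolean_space spec.
Proof.
split; first exact: spec_compact.
- rewrite open_hausdorff => p q /phi_sep [a [pa nqa]].
  exists (phi a, phi (~` a)%O) => /=.
    by rewrite !inE; split => //; rewrite phiC.
  split; [exact: phi_open | exact: phi_open |].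
  by rewrite phiC setICr.
- move=> p U oU Up; have [a [pa sa]] := oU p Up.
  by exists (phi a); split => //; exact: phi_clopen.
Qed.

Lemma spec_clopen U : clopen U -> exists a, U = phi a.
Proof.
move=> [oU cU].
pose I := [set a | phi a `<=` U].
suff [a Ia sUa] : exists2 a, I a & U `<=` phi a.
  by exists a; apply/seteqP; split.
apply: contrapT => hn.
have ne a : I a -> U `&` ~` phi a !=set0.
  move=> Ia; apply/set0P/eqP => e; apply: hn; exists a => // x Ux.
  apply: contrapT => nx.
  have : (U `&` ~` phi a) x by [].
  by rewrite e.
pose F := filter_from I (fun a => U `&` ~` phi a).
have FF : Filter F.
  apply: filter_from_filter; first by exists \bot%O; rewrite /I /= phi0.
  move=> a b Ia Ib; exists (a `|` b)%O.
    by rewrite /I /= phiU => x [/Ia|/Ib].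
  by rewrite phiU => x [Ux nx]; split; split => // h; apply: nx; [left|right].
have PF : ProperFilter F by apply: filter_from_proper.
have [x hx] := compact_filter_pt spec_compact PF.
have Ux : U x.
  by apply: hx => //; exists \bot%O; [rewrite /I /= phi0 | move=> ? []].
have [a [xa sa]] := oU x Ux.
have : (U `&` ~` phi a) x.
  apply: hx; first by apply: closedI => //; apply: open_closedC; exact: phi_open.
  by exists a.
by case=> _; apply.
Qed.

End Spec.

Section DualSpace.
Variable A : CondAlg.
Local Notation L := (ca_car A).
Local Notation imp := (@ca_imp A).

Lemma imp_mono_r (a b c : L) : (b <= c)%O -> (imp a b <= imp a c)%O.
Proof. by move=> /meet_l <-; rewrite -ca_imp_meet; exact: leIr. Qed.

Lemma imp_anti_l (a a' b : L) : (a <= a')%O -> (imp a' b <= imp a b)%O.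
Proof.
move=> /join_r {1}<-; apply: le_trans (ca_imp_join _ _ _) _; exact: leIl.
Qed.

Lemma filt_imp (p : spec L) a : filt [set c | sval p (imp a c)].
Proof.
have up := svalP p; split => /=.
- by rewrite ca_imp_top; exact: uf_top.
- by move=> x y px py; rewrite -ca_imp_meet; apply/(proj1 up).
- by move=> x y xy px; apply: uf_le up (imp_mono_r a xy) px.
Qed.

Definition Tsp (p : spec L) (Y : set (spec L)) (q : spec L) :=
  closed Y /\ forall a, Y `<=` phi a -> forall b, sval p (imp a b) -> sval q b.

Lemma TspK p a b : Tsec Tsp p (phi a) `<=` phi b <-> sval p (imp a b).
Proof.
split; last first.
  by move=> pab q [_ h]; apply: (h a).
move=> h; apply: contrapT => npab.
have [q [uq sq nqb]] := uf_ext_avoid (filt_imp p a) npab.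
apply: nqb; apply: (h (exist _ q uq)); split; first exact: (phi_clopen a).2.
move=> a' sa c pc; apply: sq => /=.
apply: uf_le (svalP p) (imp_anti_l c (phi_le sa)) pc.
Qed.

Lemma Timp_phi a b : Timp Tsp (phi a) (phi b) = phi (imp a b).
Proof.
apply/seteqP; split => p /=.
  by move=> h; apply/TspK; apply: h => //; exact: (phi_clopen a).2.
move=> pab Z cZ sZ q [_ h]; exact: (h a).
Qed.

Lemma Tsp_closed p Y q : Tsp p Y q -> closed Y.
Proof. by case. Qed.

Lemma Tsp1 p Y : closed Y -> closed (Tsec Tsp p Y).
Proof.
move=> cY.
have -> : Tsec Tsp p Y =
    \bigcap_(b in [set b | exists2 a, Y `<=` phi a & sval p (imp a b)]) phi b.
  apply/seteqP; split => q /=.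
    by move=> [_ h] b [a sa pab]; exact: h sa b pab.
  by move=> h; split => // a sa b pab; apply: (h b); exists a.
by apply: closed_bigI => b _; exact: (phi_clopen b).2.
Qed.

Lemma Tsp2 U V : clopen U -> clopen V -> clopen (Timp Tsp U V).
Proof.
move=> /spec_clopen [a ->] /spec_clopen [b ->]; rewrite Timp_phi; exact: phi_clopen.
Qed.

Lemma Tsp3 Y : closed Y -> forall x y,
  Tsp x Y y <-> (forall U, clopen U -> Y `<=` U -> Tsp x U y).
Proof.
move=> cY x y; split.
  move=> [_ h] U [_ cU] sYU; split => // a sUa; apply: h.
  exact: subset_trans sUa.
move=> h; split => // a sYa; have [_ h'] := h _ (phi_clopen a) sYa.
exact: h'.
Qed.

Definition dual_space : CondSpace :=
  @MkCondSpace (spec L) (@spec_bool _ L) Tsp Tsp_closed Tsp1 Tsp2 Tsp3.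

End DualSpace.

Lemma clop_le (X : topologicalType) (U V : clop X) : sval U `<=` sval V -> (U <= V)%O.
Proof.
move=> h; apply/meet_idPl; apply: clop_eq => /=; apply/seteqP; split => x //=.
  by case.
by move=> Ux; split => //; exact: h.
Qed.

Lemma clop_leP (X : topologicalType) (U V : clop X) : (U <= V)%O -> sval U `<=` sval V.
Proof. by move=> /meet_idPl <- x []. Qed.

Section DualAlg.
Variable X : CondSpace.
Local Notation T := (@cs_T X).

Lemma TimpL (U V : set (cs_car X)) x : clopen U -> (Timp T U V x <-> Tsec T x U `<=` V).
Proof.
move=> cU'; have [_ cU] := cU'; split; first by move=> h; exact: h.
move=> h Z cZ sZ y Txy; apply: h.
exact: (proj1 (cs_T3 cZ x y) Txy U cU' sZ).
Qed.

Definition cimp (U V : clop (cs_car X)) : clop (cs_car X) :=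
  exist _ (Timp T (sval U) (sval V)) (cs_T2 (svalP U) (svalP V)).

Fact cimp_top (U : clop (cs_car X)) : cimp U \top%O = \top%O.
Proof. by apply: clop_eq; apply/seteqP; split => x //= _ Z _ _ y. Qed.

Fact cimp_meet (U V W : clop (cs_car X)) : (cimp U V `&` cimp U W)%O = cimp U (V `&` W)%O.
Proof.
apply: clop_eq; apply/seteqP; split => x /=.
  by move=> [h1 h2] Z cZ sZ y Ty; split; [exact: h1 Ty| exact: h2 Ty].
by move=> h; split => Z cZ sZ y Ty; have [] := h Z cZ sZ y Ty.
Qed.

Fact cimp_join (U V W : clop (cs_car X)) : (cimp (U `|` V) W <= cimp U W `&` cimp V W)%O.
Proof.
apply: clop_le => x /= h; split => Z cZ sZ; apply: h => // z /sZ Uz; [by left|by right].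
Qed.

Definition dual_alg : CondAlg := @MkCondAlg _ (clop (cs_car X)) cimp cimp_top cimp_meet cimp_join.

End DualAlg.


Lemma CAhom_eq (A B : CondAlg) (f g : CAhom A B) : sval f =1 sval g -> f = g.
Proof. by case: f g => [f pf] [g pg] /= e; apply: eq_exist; apply/funext. Qed.

Lemma CShom_eq (X Y : CondSpace) (f g : CShom X Y) : sval f =1 sval g -> f = g.
Proof. by case: f g => [f pf] [g pg] /= e; apply: eq_exist; apply/funext. Qed.

Lemma spec_eq d (L : ctbDistrLatticeType d) (p q : spec L) : sval p = sval q -> p = q.
Proof. by case: p q => [p pp] [q pq] /= e; apply: eq_exist. Qed.

Lemma uf_hom (A B : CondAlg) (h : ca_car A -> ca_car B) (p : set (ca_car B)) :
  is_bool_hom h -> uf p -> uf [set a | p (h a)].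
Proof.
move=> [h1 _ _ _ h5] [u1 u2]; split => [a b|a] /=; first by rewrite h1 u1.
by rewrite h5 u2.
Qed.

Definition specmap (A B : CondAlg) (h : CAhom A B) (q : spec (ca_car B)) : spec (ca_car A) :=
  exist _ [set a | sval q (sval h a)] (uf_hom (proj1 (svalP h)) (svalP q)).

Lemma specmap_cond (A B : CondAlg) (h : CAhom A B) :
  @is_cond_fun (dual_space B) (dual_space A) (specmap h).
Proof.
split.
  apply/continuousP => W /openE_spec oW; apply/openE_spec => q /= Wq.
  have [a [qa sa]] := oW _ Wq.
  by exists (sval h a); split => // q' q'a; apply: sa.
move=> q U V /spec_clopen [a ->] /spec_clopen [b ->].
change (Tsec (@Tsp B) q (phi (sval h a)) `<=` phi (sval h b) <->
        Tsec (@Tsp A) (specmap h q) (phi a) `<=` phi b).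
by rewrite !TspK /= (proj2 (svalP h)).
Qed.

Definition Fmor (A B : CondAlg) (h : CAhom A B) : CShom (dual_space B) (dual_space A) :=
  exist _ (specmap h) (specmap_cond h).

Definition Fco : CoFunctor CA CS.
Proof.
refine (@MkCoFunctor CA CS dual_space Fmor _ _).
- by move=> A; apply: CShom_eq => q; apply: spec_eq.
- by move=> A B E f g; apply: CShom_eq => q; apply: spec_eq.
Defined.

Lemma clopen_preim (X Y : topologicalType) (f : X -> Y) (U : set Y) :
  continuous f -> clopen U -> clopen (f @^-1` U).
Proof.
move=> fc [oU cU]; split; first by apply: open_comp => // y _; exact: fc.
by apply: preimage_closed => // y _; exact: fc.
Qed.

Definition preim (X Y : CondSpace) (f : CShom X Y) (U : clop (cs_car Y)) : clop (cs_car X) :=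
  exist _ (sval f @^-1` sval U) (clopen_preim (proj1 (svalP f)) (svalP U)).

Lemma preim_cond (X Y : CondSpace) (f : CShom X Y) :
  @is_cond_hom (dual_alg Y) (dual_alg X) (preim f).
Proof.
split; first by split => [U V|U V|||U]; apply: clop_eq.
move=> U V; apply: clop_eq; apply/seteqP; split => x /=.
- move=> /(TimpL _ _ (svalP U)) h.
  apply/(TimpL _ _ (svalP (preim f U))).
  exact/(proj2 (svalP f) x _ _ (svalP U) (svalP V)).
- move=> /(TimpL _ _ (svalP (preim f U))) h.
  apply/(TimpL _ _ (svalP U)).
  exact/(proj2 (svalP f) x _ _ (svalP U) (svalP V)).
Qed.

Definition Gmor (X Y : CondSpace) (f : CShom X Y) : CAhom (dual_alg Y) (dual_alg X) :=
  exist _ (preim f) (preim_cond f).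

Definition Gco : CoFunctor CS CA.
Proof.
refine (@MkCoFunctor CS CA dual_alg Gmor _ _).
- by move=> X; apply: CAhom_eq => U; apply: clop_eq.
- by move=> X Y Z f g; apply: CAhom_eq => U; apply: clop_eq.
Defined.

Lemma cond_hom_inv (A B : CondAlg) (h : ca_car A -> ca_car B) (g : ca_car B -> ca_car A) :
  is_cond_hom h -> cancel h g -> cancel g h -> is_cond_hom g.
Proof.
move=> [[h1 h2 h3 h4 h5] h6] hK gK; have hI := can_inj hK.
split; first split.
- by move=> x y; apply: hI; rewrite h1 !gK.
- by move=> x y; apply: hI; rewrite h2 !gK.
- by apply: hI; rewrite h3 gK.
- by apply: hI; rewrite h4 gK.
- by move=> x; apply: hI; rewrite h5 !gK.
- by move=> x y; apply: hI; rewrite h6 !gK.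
Qed.

Lemma cond_fun_inv (X Y : CondSpace) (f : cs_car X -> cs_car Y) (g : cs_car Y -> cs_car X) :
  is_cond_fun f -> continuous g -> cancel f g -> cancel g f -> is_cond_fun g.
Proof.
move=> [fc fT] gc fK gK; split => // y U V cU cV.
have := fT (g y) _ _ (clopen_preim gc cU) (clopen_preim gc cV).
rewrite gK.
have e W : f @^-1` (g @^-1` W) = W.
  by apply/funext => x; rewrite /preimage /= fK.
by rewrite !e => <-.
Qed.

Section Eta.
Variable A : CondAlg.

Definition eta_f (a : ca_car A) : ca_car (dual_alg (dual_space A)) :=
  exist _ (phi a) (phi_clopen a).

Lemma eta_cond : @is_cond_hom A (dual_alg (dual_space A)) eta_f.
Proof.
split; first split.
- by move=> a b; apply: clop_eq; exact: phiI.
- by move=> a b; apply: clop_eq; exact: phiU.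
- by apply: clop_eq; exact: phi0.
- by apply: clop_eq; exact: phiT.
- by move=> a; apply: clop_eq; exact: phiC.
- by move=> a b; apply: clop_eq; symmetry; exact: (Timp_phi a b).
Qed.

Definition eta_inv (U : ca_car (dual_alg (dual_space A))) : ca_car A :=
  projT1 (cid (spec_clopen (svalP U))).

Lemma eta_invK : cancel eta_inv eta_f.
Proof.
move=> U; apply: clop_eq => /=; rewrite /eta_inv.
by case: (cid _) => a /= ->.
Qed.

Lemma eta_fK : cancel eta_f eta_inv.
Proof.
move=> a; apply: phi_inj; rewrite /eta_inv.
by case: (cid _) => b /= <-.
Qed.

Definition eta_m : CAhom A (dual_alg (dual_space A)) := exist _ eta_f eta_cond.
Definition eta_im : CAhom (dual_alg (dual_space A)) A :=
  exist _ eta_inv (cond_hom_inv eta_cond eta_fK eta_invK).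

End Eta.

Section Eps.
Variable X : CondSpace.
Local Notation Xc := (cs_car X).
Local Notation CL := (clop Xc).

Lemma uf_pt (x : Xc) : uf [set U : CL | sval U x].
Proof. by split => [U V|U]. Qed.

Definition eps_f (x : Xc) : cs_car (dual_space (dual_alg X)) :=
  exist _ [set U : CL | sval U x] (uf_pt x).

Lemma eps_surj (p : spec CL) : exists x, eps_f x = p.
Proof.
have [ufm ufc] := svalP p.
pose F := filter_from [set U : CL | sval p U] sval.
have FF : Filter F.
  apply: filter_from_filter; first by exists \top%O; exact: (uf_top (svalP p)).
  move=> U V pU pV; exists (U `&` V)%O => //; exact/ufm.
have PF : ProperFilter F.
  apply: filter_from_proper => U pU; apply: contrapT => /set0P/negP/negPn/eqP e.
  have : U = \bot%O by apply: clop_eq.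
  by move=> eU; apply: (uf_bot (svalP p)); rewrite -eU.
have [cX _ _] := cs_bool X.
have [x hx] := compact_filter_pt cX PF.
exists x; apply: spec_eq; apply/funext => U; apply/propext; split => /=.
  move=> Ux; apply: contrapT => npU.
  have : sval (~` U)%O x.
    apply: hx; first exact: (svalP (~` U)%O).2.
    by exists (~` U)%O => //; apply/ufc.
  by [].
move=> pU; apply: hx; first exact: (svalP U).2.
by exists U.
Qed.

Lemma eps_inj : injective eps_f.
Proof.
move=> x y e; apply: contrapT => /eqP nxy.
have [_ hs cb] := cs_bool X.
have [Oo [oO xO yO]] := hausdorff_accessible hs nxy.
move: xO yO; rewrite !inE => xO yO.
have [V [cV Vx sVO]] := cb x Oo oO xO.
have : sval (eps_f x) (exist _ V cV) by [].
by rewrite e => /= /sVO.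
Qed.

Lemma eps_cont : continuous eps_f.
Proof.
apply/continuousP => W /openE_spec oW.
have -> : eps_f @^-1` W = \bigcup_(U in [set U : CL | phi U `<=` W]) sval U.
  apply/seteqP; split => x /=.
    by move=> /oW [U [Ux sU]]; exists U.
  by move=> [U sU Ux]; apply: sU.
by apply: bigcup_open => U _; exact: (svalP U).1.
Qed.

Lemma eps_cond : @is_cond_fun X (dual_space (dual_alg X)) eps_f.
Proof.
split; first exact: eps_cont.
move=> x U' V' /spec_clopen [U ->] /spec_clopen [V ->].
change (Tsec (@cs_T X) x (sval U) `<=` sval V <->
        Tsec (@Tsp (dual_alg X)) (eps_f x) (phi U) `<=` phi V).
rewrite TspK; exact: (iff_sym (TimpL _ _ (svalP U))).
Qed.

Definition delta (p : spec CL) : Xc := projT1 (cid (eps_surj p)).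

Lemma deltaK : cancel delta eps_f.
Proof. by move=> p; rewrite /delta; case: (cid _). Qed.

Lemma eps_fK : cancel eps_f delta.
Proof. by move=> x; apply: eps_inj; rewrite deltaK. Qed.

Lemma delta_cont : continuous (delta : cs_car (dual_space (dual_alg X)) -> Xc).
Proof.
apply/continuousP => Oo oO; apply/openE_spec => p /= Op.
have [_ _ cb] := cs_bool X.
have [V [cV Vx sVO]] := cb (delta p) Oo oO Op.
exists (exist _ V cV); split.
  by rewrite -(deltaK p).
move=> q qV /=; apply: sVO.
by move: qV; rewrite /phi /= -{1}(deltaK q).
Qed.

Definition eps_m : CShom X (dual_space (dual_alg X)) := exist _ eps_f eps_cond.
Definition eps_im : CShom (dual_space (dual_alg X)) X :=
  exist _ delta (cond_fun_inv eps_cond delta_cont eps_fK deltaK).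

End Eps.

Theorem theorem6p5 : dually_equivalent CA CS.
Proof.
exists Fco, Gco, eta_m, eps_m; split; [|split; [|split]].
- move=> A; exists (eta_im A); split.
  + by apply: CAhom_eq => a /=; exact: eta_fK.
  + by apply: CAhom_eq => U /=; exact: eta_invK.
- by move=> A B f; apply: CAhom_eq => a; apply: clop_eq.
- move=> X; exists (eps_im X); split.
  + by apply: CShom_eq => x /=; exact: eps_fK.
  + by apply: CShom_eq => p /=; exact: deltaK.
- by move=> X Y f; apply: CShom_eq => x; apply: spec_eq.
Qed.
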